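(* Consider an ontological model with a finite set of ontic states $\Lambda=\{\lambda_1,\lambda_2,\dots\}$ reproducing the statistics of preparations $P_1,\dots,P_n$ and a set of binary measurements. Associate to each preparation the vector $\vec\mu_i=(\mu(\lambda_1|P_i),\mu(\lambda_2|P_i),\dots)$, and let $k$ be the affine dimension of $\{\vec\mu_i\}_{i=1}^n$. If the model is preparation noncontextual, then any tomographically complete set of (binary) measurements contains at least $k$ measurements.
   Context: Prepare-and-measure scenario: preparations $P_i$ and binary measurements $M$ (outcomes $\{0,1\}$) with empirical probabilities $P^e(k|P,M)$. A mixture is a probability distribution $Q$ on preparations. Two mixtures $Q,Q'$ are operationally equivalent with respect to a set of measurements $\mathcal M$ if $\sum_i Q(P_i)P^e(k|P_i,M)=\sum_i Q'(P_i)P^e(k|P_i,M)$ for all $M\in\mathcal M$ and $k$. A set $\mathcal M_C$ is tomographically complete if the statistics of every measurement are linear functions of the statistics of the measurements in $\mathcal M_C$ (the same functions for all preparations); operational equivalence is judged with respect to a tomographically complete set. An ontological model consists of ontic states $\Lambda$, distributions $\mu(\lambda|P)$ and response functions $P^t(k|\lambda,M)$ with $P^e(k|P,M)=\sum_\lambda\mu(\lambda|P)P^t(k|\lambda,M)$. It is preparation noncontextual if operationally equivalent mixtures $Q,Q'$ satisfy $\sum_i Q(P_i)\mu(\lambda|P_i)=\sum_i Q'(P_i)\mu(\lambda|P_i)$ for all $\lambda$. *)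

(* Defs.v *)
From HB Require Import structures.
From mathcomp Require Import all_boot all_order all_algebra.
Set Implicit Arguments. Unset Strict Implicit. Unset Printing Implicit Defensive.
Import Order.TTheory GRing.Theory Num.Theory.
Local Open Scope ring_scope.

(* Prepare-and-measure scenario with n.+1 preparations P_0..P_n, finite ontic
   state space Lambda = 'I_L, and an arbitrary collection [Meas] of binary
   measurements (outcomes k : bool, false = 0, true = 1).
   mu i l  = mu(lambda_l | P_i),   xi M k l = P^t(k | lambda_l, M). *)

Section Model.
Variables (R : realFieldType) (L n : nat) (Meas : Type).
Variables (mu : 'I_n.+1 -> 'I_L -> R) (xi : Meas -> bool -> 'I_L -> R).

Definition is_ontological_model : Prop :=
  (forall i l, 0 <= mu i l) /\ (forall i, \sum_(l < L) mu i l = 1) /\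
  (forall M k l, 0 <= xi M k l) /\ (forall M l, xi M false l + xi M true l = 1).

Definition Pe (i : 'I_n.+1) (M : Meas) (k : bool) : R :=
  \sum_(l < L) mu i l * xi M k l.

Definition is_mixture (Q : 'I_n.+1 -> R) : Prop :=
  (forall i, 0 <= Q i) /\ \sum_(i < n.+1) Q i = 1.

Definition op_equiv (Q Q' : 'I_n.+1 -> R) : Prop :=
  forall M k, \sum_(i < n.+1) Q i * Pe i M k = \sum_(i < n.+1) Q' i * Pe i M k.

Definition prep_noncontextual : Prop :=
  forall Q Q', is_mixture Q -> is_mixture Q' -> op_equiv Q Q' ->
    forall l, \sum_(i < n.+1) Q i * mu i l = \sum_(i < n.+1) Q' i * mu i l.

Definition tomographically_complete (m : nat) (s : 'I_m -> Meas) : Prop :=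
  forall M k, exists c : 'I_m -> bool -> R,
    forall i, Pe i M k = \sum_(j < m) \sum_(k' : bool) c j k' * Pe i (s j) k'.

Definition affine_dim : nat :=
  \rank (\matrix_(i < n.+1, l < L) (mu i l - mu ord0 l)).

End Model.

(* Main.v *)
Require Import Defs.
From HB Require Import structures.
From mathcomp Require Import all_boot all_order all_algebra.
Import Order.TTheory GRing.Theory Num.Theory.
Local Open Scope ring_scope.

Definition pp {R : realFieldType} (x : R) := if 0 <= x then x else 0.

Lemma pp_ge0 {R : realFieldType} (x : R) : 0 <= pp x.
Proof. by rewrite /pp; case: ifP. Qed.

Lemma maxpn {R : realFieldType} (x : R) : pp x - pp (- x) = x.
Proof.
rewrite /pp oppr_ge0; case: (lerP 0 x) => h.
- case: ifP => h2; last by rewrite subr0.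
  have -> : x = 0 by apply/eqP; rewrite eq_le h h2.
  by rewrite oppr0 subr0.
- by rewrite (ltW h) sub0r opprK.
Qed.

Lemma key (R : realFieldType) (L n : nat) (Meas : Type)
    (mu : 'I_n.+1 -> 'I_L -> R) (xi : Meas -> bool -> 'I_L -> R) :
  prep_noncontextual mu xi ->
  forall w : 'I_n.+1 -> R, \sum_i w i = 0 ->
  (forall M k, \sum_i w i * Pe mu xi i M k = 0) ->
  forall l, \sum_i w i * mu i l = 0.
Proof.
move=> pnc w w0 wP l.
pose wp i := pp (w i). pose wn i := pp (- w i).
have wE i : w i = wp i - wn i by rewrite maxpn.
pose S := \sum_i wp i.
have S0 : 0 <= S by apply: sumr_ge0 => i _; apply: pp_ge0.
have Sn : \sum_i wn i = S.
  apply/eqP; rewrite -subr_eq0 /S -sumrB -oppr_eq0 -sumrN; apply/eqP.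
  by rewrite -[RHS]w0; apply: eq_bigr => i _; rewrite wE opprB.
have S1 : S + 1 != 0 by rewrite gt_eqF // ltr_wpDl.
pose c := (S + 1)^-1.
pose Q i := c * (wp i + (i == ord0)%:R).
pose Q' i := c * (wn i + (i == ord0)%:R).
have QQ i : Q i - Q' i = c * w i by rewrite /Q /Q' -mulrBr wE; congr (_ * _); by rewrite opprD addrACA subrr addr0.
have diff (x : 'I_n.+1 -> R) : \sum_i Q i * x i - \sum_i Q' i * x i = c * \sum_i w i * x i.
  rewrite -sumrB mulr_sumr; apply: eq_bigr => i _; by rewrite -mulrBl QQ mulrA.
have sum1 (f : 'I_n.+1 -> R) : \sum_i f i = S -> \sum_i c * (f i + (i == ord0)%:R) = 1.
  move=> fS; rewrite -mulr_sumr big_split /= fS (bigD1 ord0) //= big1 ?addr0 ?mulVf //.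
  by move=> i /negbTE ->.
have ge0 (f : 'I_n.+1 -> R) : (forall i, 0 <= f i) -> forall i, 0 <= c * (f i + (i == ord0)%:R).
  move=> fP i; apply: mulr_ge0; first by rewrite invr_ge0 addr_ge0.
  by apply: addr_ge0.
have := pnc Q Q'.
have /[swap] /[apply] : is_mixture Q by split; [apply: ge0 => i; apply: pp_ge0 | apply: sum1].
have /[swap] /[apply] : is_mixture Q' by split; [apply: ge0 => i; apply: pp_ge0 | apply: sum1].
have /[swap] /[apply] : op_equiv mu xi Q Q'.
  by move=> M k; apply/eqP; rewrite -subr_eq0 diff wP mulr0.
move=> /(_ l) /eqP; rewrite -subr_eq0 diff mulf_eq0 invr_eq0 (negbTE S1) /=.
by move/eqP.
Qed.

Lemma shiftw (R : realFieldType) (n : nat) (v x : 'I_n.+1 -> R) :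
  \sum_i (v i - (i == ord0)%:R * \sum_j v j) * x i = \sum_i v i * (x i - x ord0).
Proof.
under eq_bigr do rewrite mulrBl.
rewrite sumrB [X in _ - X](bigD1 ord0) //= [X in _ * _ * _ + X]big1 ?addr0; last by move=> i /negbTE ->; rewrite !mul0r.
under [RHS]eq_bigr do rewrite mulrBr.
by rewrite sumrB mul1r -mulr_suml.
Qed.

From mathcomp Require Import zify.

Theorem lemma3 (R : realFieldType) (L n : nat) (Meas : Type)
    (mu : 'I_n.+1 -> 'I_L -> R) (xi : Meas -> bool -> 'I_L -> R) :
  is_ontological_model mu xi ->
  prep_noncontextual mu xi ->
  forall (m : nat) (s : 'I_m -> Meas), injective s ->
  tomographically_complete mu xi s ->
  (affine_dim mu <= m)%N.
Proof.
move=> [mu0 [mu1 [xi0 xi1]]] pnc m s _ tc.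
have PeS i M : Pe mu xi i M false = 1 - Pe mu xi i M true.
  apply/eqP; rewrite eq_sym subr_eq -(mu1 i) /Pe -big_split /=; apply/eqP.
  by apply: eq_bigr => l _; rewrite -mulrDr xi1 mulr1.
have core (v : 'I_n.+1 -> R) :
  (forall j, \sum_i v i * (Pe mu xi i (s j) true - Pe mu xi ord0 (s j) true) = 0) ->
  forall l, \sum_i v i * (mu i l - mu ord0 l) = 0.
  move=> hv l.
  pose w i := v i - (i == ord0)%:R * \sum_j v j.
  have Wx (x : 'I_n.+1 -> R) : \sum_i w i * x i = \sum_i v i * (x i - x ord0) by apply: shiftw.
  have Wsum : \sum_i w i = 0.
    transitivity (\sum_i w i * 1); first by apply: eq_bigr => i _; rewrite mulr1.
    by rewrite (Wx (fun _ => 1)) big1 // => i _; rewrite subrr mulr0.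
  have Wt j : \sum_i w i * Pe mu xi i (s j) true = 0 by rewrite Wx hv.
  have Wz j k' : \sum_i w i * Pe mu xi i (s j) k' = 0.
    case: k'; first exact: Wt.
    under eq_bigr do rewrite PeS mulrBr mulr1.
    by rewrite sumrB Wsum Wt subrr.
  rewrite -(Wx (mu^~ l)); apply: (@key _ _ _ _ _ _ pnc _ Wsum) => M k.
  have [c hc] := tc M k.
  under eq_bigr do rewrite hc mulr_sumr.
  rewrite exchange_big big1 // => j _.
  under eq_bigr do rewrite mulr_sumr.
  rewrite exchange_big big1 // => k' _.
  under eq_bigr do rewrite mulrCA.
  by rewrite -mulr_sumr Wz mulr0.
pose D := \matrix_(i < n.+1, l < L) (mu i l - mu ord0 l).
pose E := \matrix_(i < n.+1, j < m) (Pe mu xi i (s j) true - Pe mu xi ord0 (s j) true).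
have sub : (kermx E <= kermx D)%MS.
  have KE := mulmx_ker E.
  move: (kermx E) KE => K KE.
  apply/sub_kermxP; apply/matrixP => a l; rewrite [RHS]mxE mxE.
  under eq_bigr do rewrite /D mxE.
  apply: (core (fun i => K a i)) => j.
  move/matrixP: KE => /(_ a j); rewrite [RHS]mxE mxE => h; rewrite -[RHS]h.
  by apply: eq_bigr => i _; rewrite /E mxE.
have := mxrankS sub; rewrite !mxrank_ker.
have := rank_leq_row D; have := rank_leq_col E.
rewrite /affine_dim -/D; lia.
Qed.
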